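(* Let $\Gamma$, $g$, $\chi$, $r$ and $A$ be as follows: $V=kv$ with $v\in V^\chi_g$, $\chi(g)$ a primitive $r$-th root of unity, $\chi^r=\epsilon$, $g^r\ne1$, and $A$ the Hopf algebra generated by $\Gamma$ and $x$ with $\Delta x=x\otimes 1+g\otimes x$, $hx=\chi(h)xh$, $x^r=g^r-1$. Let $s$ be the order of $g^r$ in $\Gamma$. Then the Jacobson radical of $A$ is the two-sided ideal generated by $(1+g^r+g^{2r}+\cdots+g^{(s-1)r})x$.
   Context: $k$ algebraically closed of characteristic $0$, $\Gamma$ a finite abelian group, $\hat\Gamma$ its character group with trivial character $\epsilon$; $V^\chi_g$ denotes elements of degree $g$ on which $h\in\Gamma$ acts by $\chi(h)$. *)

(* Defs.v *)
From HB Require Import structures.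
From mathcomp Require Import all_boot all_order all_algebra all_fingroup.
Set Implicit Arguments. Unset Strict Implicit. Unset Printing Implicit Defensive.
Import GRing.Theory.
Local Open Scope ring_scope.

Definition left_ideal (R : nzRingType) (I : R -> Prop) : Prop :=
  [/\ I 0, (forall a b, I a -> I b -> I (a + b)) & (forall a b, I b -> I (a * b))].

Definition maximal_left_ideal (R : nzRingType) (I : R -> Prop) : Prop :=
  [/\ left_ideal I, ~ I 1 &
      forall J : R -> Prop, left_ideal J -> ~ J 1 ->
        (forall a, I a -> J a) -> forall a, J a -> I a].

Definition jacobson_radical (R : nzRingType) (a : R) : Prop :=
  forall I : R -> Prop, maximal_left_ideal I -> I a.

Definition ideal_gen (R : nzRingType) (e : R) (a : R) : Prop :=
  exists n (u v : 'I_n -> R), a = \sum_(i < n) u i * e * v i.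

Definition is_alg_hom (k : fieldType) (A B : algType k) (f : A -> B) : Prop :=
  [/\ forall a b, f (a + b) = f a + f b,
      forall (c : k) a, f (c *: a) = c *: f a,
      forall a b, f (a * b) = f a * f b & f 1 = 1].

Definition A_rels (k : fieldType) (Gam : finGroupType) (chi : Gam -> k)
    (g : Gam) (r : nat) (B : algType k) (gam : Gam -> B) (x : B) : Prop :=
  [/\ gam 1%g = 1,
      forall h1 h2, gam (h1 * h2)%g = gam h1 * gam h2,
      forall h, gam h * x = chi h *: (x * gam h) &
      x ^+ r = gam (g ^+ r)%g - 1].

(* (A, gam, x) is the k-algebra presented by generators Gamma, x and the relations:
   universal property. *)
Definition is_presented_A (k : fieldType) (Gam : finGroupType) (chi : Gam -> k)
    (g : Gam) (r : nat) (A : algType k) (gam : Gam -> A) (x : A) : Prop :=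
  A_rels chi g r gam x /\
  forall (B : algType k) (gamB : Gam -> B) (xB : B), A_rels chi g r gamB xB ->
    (exists f : A -> B, [/\ is_alg_hom f, forall h, f (gam h) = gamB h & f x = xB]) /\
    (forall f1 f2 : A -> B,
        is_alg_hom f1 -> (forall h, f1 (gam h) = gamB h) -> f1 x = xB ->
        is_alg_hom f2 -> (forall h, f2 (gam h) = gamB h) -> f2 x = xB ->
        forall a, f1 a = f2 a).

(* Main.v *)
From HB Require Import structures.
From mathcomp Require Import all_boot all_order all_algebra all_fingroup all_solvable all_field.
From mathcomp Require Import boolp classical_sets.
Require Import Defs.
Import GRing.Theory.
Set Implicit Arguments. Unset Strict Implicit. Unset Printing Implicit Defensive.
From Stdlib Require Import Classical.
Local Open Scope ring_scope.
Lemma prim_root_ex (k : closedFieldType) (char0 : [pchar k] =i pred0) (n : nat) :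
  (0 < n)%N -> exists z : k, n.-primitive_root z.
Proof.
move=> n0.
pose P : {poly k} := 'X^n - 1.
have [rs Hrs] := closed_field_poly_normal P.
have mP : P \is monic by rewrite /P -[1]/(1%:P) monicXnsubC.
rewrite (monicP mP) scale1r in Hrs.
have szP : size P = n.+1 by rewrite /P -[1]/(1%:P) size_XnsubC.
have szrs : size rs = n.
  by move: szP; rewrite Hrs size_prod_XsubC => -[].
have nz : (n%:R : k) != 0 by rewrite (proj1 (pcharf0P _) char0) -lt0n.
have sepP : separable_poly P.
  rewrite unlock.
  apply/Bezout_coprimepP; exists (-1, (n%:R)^-1 *: 'X) => /=.
  rewrite /P derivB derivXn derivC subr0 -scaler_nat -scalerAl -scalerAr scalerA.
  rewrite mulVf // scale1r -exprS prednK // mulN1r opprB.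
  rewrite subrK.
  exact: eqpxx.
have urs : uniq rs by rewrite -separable_prod_XsubC -Hrs.
have : has n.-primitive_root rs.
  apply: has_prim_root => //; last by rewrite szrs.
  apply/allP => w wrs; rewrite unity_rootE.
  have : root P w by rewrite Hrs root_prod_XsubC.
  by rewrite /root /P !hornerE subr_eq0.
by case/hasP => z _ pz; exists z.
Qed.

Lemma jac_nil (R : nzRingType) (y : R) (n : nat) :
  (forall b, (b * y) ^+ n = 0) -> jacobson_radical y.
Proof.
move=> Hn M [[M0 Madd Mmul] M1 Mmax].
pose J' a := exists m b, M m /\ a = m + b * y.
have J'l : left_ideal J'.
  split; first by exists 0, 0; rewrite mul0r addr0.
  - move=> a b [m1 [b1 [Hm1 ->]]] [m2 [b2 [Hm2 ->]]].
    exists (m1 + m2), (b1 + b2); split; first exact: Madd.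
    by rewrite mulrDl addrACA.
  - move=> a b [m1 [b1 [Hm1 ->]]]; exists (a * m1), (a * b1); split; first exact: Mmul.
    by rewrite mulrDr mulrA.
have MJ' : forall a, M a -> J' a by move=> a Ma; exists a, 0; rewrite mul0r addr0.
have [[m [b [Hm E]]]|nJ] := classic (J' 1); last first.
  by apply: (Mmax J' J'l nJ MJ'); exists 0, 1; rewrite mul1r add0r.
exfalso; apply: M1.
have -> : 1 = (\sum_(i < n) (b * y) ^+ i) * m.
  have -> : m = 1 - b * y by rewrite E addrK.
  have := subrX1 (b * y) n; rewrite Hn sub0r => H.
  have C : GRing.comm (\sum_(i < n) (b * y) ^+ i) (b * y - 1).
    apply: commr_sym; apply: commr_sum => i _; apply: commrX.
    apply: commr_sym; apply: commrB; [exact: commr_refl | exact: commr1].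
  by rewrite -opprB mulrN C -H opprK.
exact: Mmul.
Qed.

Lemma jac_mull (R : nzRingType) (a b : R) : jacobson_radical b -> jacobson_radical (a * b).
Proof. by move=> Hb M HM; case: (HM) => [[_ _ Mm] _ _]; apply: Mm; exact: Hb. Qed.

Lemma jac_add (R : nzRingType) (a b : R) :
  jacobson_radical a -> jacobson_radical b -> jacobson_radical (a + b).
Proof. by move=> Ha Hb M HM; case: (HM) => [[_ Ma _] _ _]; apply: Ma; [exact: Ha|exact: Hb]. Qed.

Lemma jac0 (R : nzRingType) : jacobson_radical (0 : R).
Proof. by move=> M [[]]. Qed.

Lemma jac_sum (R : nzRingType) (I : Type) (s : seq I) (F : I -> R) :
  (forall i, jacobson_radical (F i)) -> jacobson_radical (\sum_(i <- s) F i).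
Proof.
move=> HF; elim: s => [|i s IH]; first by rewrite big_nil; exact: jac0.
by rewrite big_cons; apply: jac_add.
Qed.

Lemma jac_conj (R : nzRingType) (u v a : R) : u * v = 1 -> v * u = 1 ->
  jacobson_radical a -> jacobson_radical (u * a * v).
Proof.
move=> uv vu Ha M [[M0 Madd Mmul] M1 Mmax].
pose M' b := M (b * v).
have M'l : left_ideal M'.
  split; rewrite /M'; first by rewrite mul0r.
  - by move=> a1 b1 H1 H2; rewrite mulrDl; apply: Madd.
  - by move=> a1 b1 H1; rewrite -mulrA; apply: Mmul.
have M'max : maximal_left_ideal M'.
  split => //.
  - by rewrite /M' mul1r => Mv; apply: M1; rewrite -uv; apply: Mmul.
  - move=> J Jl J1 M'J b Jb.
    pose J' c := J (c * u).
    have J'l : left_ideal J'.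
      case: Jl => J0 Ja Jm; split; rewrite /J'; first by rewrite mul0r.
      - by move=> a1 b1 H1 H2; rewrite mulrDl; apply: Ja.
      - by move=> a1 b1 H1; rewrite -mulrA; apply: Jm.
    have J'1 : ~ J' 1.
      rewrite /J' mul1r => Ju; apply: J1; rewrite -vu; case: Jl => _ _ Jm; exact: Jm.
    have MJ' : forall c, M c -> J' c.
      by move=> c Mc; apply: M'J; rewrite /M' -mulrA uv mulr1.
    by rewrite /M'; apply: (Mmax J' J'l J'1 MJ'); rewrite /J' -mulrA vu mulr1.
have := Ha M' M'max; rewrite /M' => H.
by rewrite -mulrA; apply: Mmul.
Qed.

Lemma jac_idem (R : nzRingType) (f : R) : f * f = f -> f != 0 -> ~ jacobson_radical f.
Proof.
move=> ff f0 Jf.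
pose L : set R := fun a => exists b, a = b * (1 - f).
pose P : set (set R) := fun I =>
  [/\ I = set0 \/ (forall a, L a -> I a), (forall a b, I a -> I b -> I (a + b)),
      (forall a b, I b -> I (a * b)) & ~ I f].
have Lnf : ~ L f.
  case=> b Eb; move/eqP: f0; apply; rewrite -ff {1}Eb -mulrA mulrBl mul1r ff.
  by rewrite subrr mulr0.
have PL : P L.
  split; [by right | | | exact: Lnf].
  - by move=> a b [a' ->] [b' ->]; exists (a' + b'); rewrite mulrDl.
  - by move=> a b [b' ->]; exists (a * b'); rewrite mulrA.
have [M [[M0 Madd Mmul Mf] Mmax]] : exists A : set R, P A /\ (forall B, (A `<` B)%classic -> ~ P B).
  apply: Zorn_bigcup => F FP Ftot.
  split.
  - have [[X [FX Xn]]|H] := classic (exists X, F X /\ X <> set0).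
      right => a La; exists X => //; have [[]] := FP X FX; first by move=> /Xn.
      by move=> H _ _ _; apply: H.
    left; apply/seteqP; split => a //= [X FX Xa].
    have : X = set0 by apply: NNPP => nX; apply: H; exists X.
    by move=> E; rewrite E in Xa.
  - move=> a b [X FX Xa] [Y FY Yb].
    have [XY|YX] := Ftot X Y FX FY.
    + exists Y => //; have [_ Ya _ _] := FP Y FY; apply: Ya => //; exact: XY.
    + exists X => //; have [_ Xa' _ _] := FP X FX; apply: Xa' => //; exact: YX.
  - move=> a b [X FX Xb]; exists X => //; have [_ _ Xm _] := FP X FX; exact: Xm.
  - by move=> [X FX Xf]; have [_ _ _ Xnf] := FP X FX; exact: Xnf.
have LM : forall a, L a -> M a.
  case: M0 => [M0|//]; exfalso; apply: (Mmax L) => //; rewrite M0; split => //.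
  by move=> /(_ 0); apply => //; exists 0; rewrite mul0r.
have Ml : left_ideal M by split => //; apply: LM; exists 0; rewrite mul0r.
have M1 : ~ M 1 by move=> H; apply: Mf; rewrite -(mulr1 f); exact: Mmul.
apply: Mf; apply: Jf; split => // J [J0 Ja Jm] J1 MJ.
apply: NNPP => nJM; apply: (Mmax J); first by split => //.
split => //; first by right => a La; apply: MJ; apply: LM.
move=> Jf'; apply: J1; rewrite -(subrK f 1); apply: Ja => //.
by apply: MJ; apply: LM; exists 1; rewrite mul1r.
Qed.


Lemma geom0 (k : fieldType) (y : k) (n : nat) : y ^+ n = 1 -> y != 1 -> \sum_(i < n) y ^+ i = 0.
Proof.
move=> yn y1; have := subrX1 y n; rewrite yn subrr => /esym/eqP.
by rewrite mulf_eq0 subr_eq0 (negbTE y1) => /eqP.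
Qed.

Lemma sumr_ord_const (V : nmodType) (m : nat) (c : V) : \sum_(i < m) c = c *+ m.
Proof. by elim: m => [|m IH]; rewrite ?big_ord0 // big_ord_recr /= IH mulrSr. Qed.

Section Eig.
Variables (k : fieldType) (A : algType k) (n : nat) (z : k).
Hypothesis pz : n.-primitive_root z.

Definition Sj (u : A) (j : nat) := \sum_(t < n) (z ^+ j *: u) ^+ t.

Lemma n_gt0 : (0 < n)%N. Proof. exact: prim_order_gt0 pz. Qed.
Lemma nR0 : (n%:R : k) != 0. Proof. exact: prim_root_natf_neq0 pz. Qed.
Lemma z0 : z != 0. Proof. by rewrite (prim_root_eq0 pz) -lt0n n_gt0. Qed.

Variable u : A.
Hypothesis un : u ^+ n = 1.

Lemma Sj_fix j : (z ^+ j *: u) * Sj u j = Sj u j.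
Proof.
have := subrX1 (z ^+ j *: u) n.
rewrite exprZn un -exprM mulnC exprM (prim_expr_order pz) expr1n scale1r subrr.
by move/esym/eqP; rewrite mulrBl mul1r subr_eq0 => /eqP.
Qed.

Lemma Sj_fixX j t : (z ^+ j *: u) ^+ t * Sj u j = Sj u j.
Proof. by elim: t => [|t IH]; rewrite ?mul1r // exprSr -mulrA Sj_fix. Qed.

Lemma Sj_eig j : u * Sj u j = (z ^+ j)^-1 *: Sj u j.
Proof.
rewrite -{2}(Sj_fix j) -scalerAl scalerA mulVf ?scale1r //.
by rewrite expf_neq0 // z0.
Qed.

Lemma Sj_sq j : Sj u j * Sj u j = n%:R *: Sj u j.
Proof.
rewrite {1}/Sj big_distrl /=.
rewrite (eq_bigr (fun _ => Sj u j)); last by move=> t _; rewrite Sj_fixX.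
by rewrite sumr_ord_const scaler_nat.
Qed.

Lemma Sj_sum : \sum_(j < n) Sj u j = n%:R *: 1.
Proof.
rewrite /Sj exchange_big /=.
rewrite (eq_bigr (fun t : 'I_n => (\sum_(j < n) (z ^+ t) ^+ j) *: u ^+ t)); last first.
  by move=> t _; rewrite scaler_suml; apply: eq_bigr => j _; rewrite exprZn -exprM mulnC exprM.
case: n pz => [|m] pm; first by have := prim_order_gt0 pm.
rewrite big_ord_recl /= [X in _ + X]big1 ?addr0.
  rewrite (eq_bigr (fun _ => 1)); last by move=> i _; rewrite expr0 expr1n.
  by rewrite sumr_ord_const expr0.
move=> t _; rewrite geom0 ?scale0r //.
  by rewrite -exprM mulnC exprM (prim_expr_order pm) expr1n.
rewrite -(prim_expr_order pm) (eq_prim_root_expr pm).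
by rewrite /bump /= add1n modnn modn_small // ltnS ltn_ord.
Qed.

Lemma Sj_comm (v : A) j : v * u = u * v -> v * Sj u j = Sj u j * v.
Proof.
move=> vu; rewrite /Sj big_distrr big_distrl /=; apply: eq_bigr => t _.
by apply: commrX; rewrite /GRing.comm -scalerAl -scalerAr vu.
Qed.

End Eig.

Section EigInd.
Variables (k : fieldType) (A : algType k) (n : nat) (z : k).
Hypothesis pz : n.-primitive_root z.
Variable P : A -> Prop.
Hypothesis Pn : forall u, P u -> u ^+ n = 1.
Hypothesis Pc : forall u v, P u -> P v -> u * v = v * u.

Lemma eig_ind (L : seq A) : (forall u, u \in L -> P u) -> forall y : A, y != 0 ->
  exists F, [/\ F * F = F, y * F != 0, forall v, P v -> v * F = F * v &
     forall u, u \in L -> exists w : k, u * F = w *: F].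
Proof.
elim: L => [|u L IH] HL y y0.
  by exists 1; split; [exact: mulr1 | rewrite mulr1 | move=> v _; rewrite mulr1 mul1r | ].
have [|F [FF yF Fc FL]] := IH _ y y0.
  by move=> v vL; apply: HL; rewrite inE vL orbT.
have Pu : P u by apply: HL; rewrite mem_head.
have un := Pn Pu.
pose f (j : nat) := (n%:R)^-1 *: Sj n z u j.
have sumf : \sum_(j < n) f j = 1.
  rewrite -scaler_sumr (Sj_sum pz u) scalerA mulVf ?(nR0 pz) //; exact: scale1r.
have fc : forall v j, v * u = u * v -> v * f j = f j * v.
  by move=> v j vu; rewrite /f -scalerAr -scalerAl Sj_comm.
have ff : forall j, f j * f j = f j.
  move=> j; rewrite /f -scalerAr -scalerAl (Sj_sq pz un) !scalerA.
  by rewrite mulfVK ?(nR0 pz).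
have fe : forall j, u * f j = (z ^+ j)^-1 *: f j.
  by move=> j; rewrite /f -scalerAr (Sj_eig pz un) scalerA mulrC -scalerA.
have Fu : F * u = u * F by rewrite (Fc u Pu).
have : exists j : 'I_n, y * F * f j != 0.
  apply: NNPP => H; move/eqP: yF; apply.
  rewrite -(mulr1 (y * F)) -sumf big_distrr big1 //= => j _.
  case: (eqVneq (y * F * f j) 0) => // Hne; exfalso; apply: H; exists j; exact: Hne.
case=> j Hj.
have fF : f j * F = F * f j by rewrite -fc.
exists (F * f j); split.
- by rewrite -mulrA (mulrA (f j)) fF -!mulrA ff mulrA FF.
- by rewrite mulrA.
- by move=> v Pv; rewrite mulrA (Fc v Pv) -!mulrA (fc v j (Pc Pv Pu)).
- move=> w; rewrite inE => /orP[/eqP ->|wL].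
    by exists ((z ^+ j)^-1); rewrite mulrA -Fu -mulrA fe scalerAr.
  by have [c Hc] := FL w wL; exists c; rewrite mulrA Hc scalerAl.
Qed.

End EigInd.
Section SubAlg.
Variables (k : fieldType) (A : algType k) (S : {pred A}).
Definition Sp (hS : subalg_closed S) : {pred A} := S.
Variable (hS : subalg_closed S).
HB.instance Definition _ := GRing.isSubalgClosed.Build k A (Sp hS) (GRing.subalg_closed_semi hS).
Inductive SB := mkSB y of y \in Sp hS.
Definition vSB u := let: mkSB y _ := u in y.
HB.instance Definition _ := [isSub for vSB].
HB.instance Definition _ := [Choice of SB by <:].
HB.instance Definition _ := [SubChoice_isSubAlgebra of SB by <:].
End SubAlg.

Lemma pres_sub (k : fieldType) (Gam : finGroupType) (chi : Gam -> k) (g : Gam) (r : nat)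
  (A : algType k) (gam : Gam -> A) (x : A) (pres : is_presented_A chi g r gam x)
  (S : {pred A}) (hS : subalg_closed S) :
  (forall h, gam h \in S) -> x \in S -> forall a, a \in S.
Proof.
move=> Sg Sx a.
have [[g1 gM gx xr] univ] := pres.
pose B := SB hS.
pose gamB h : B := @mkSB _ _ _ hS (gam h) (Sg h).
pose xB : B := @mkSB _ _ _ hS x Sx.
have vg h : val (gamB h) = gam h by [].
have vx : val xB = x by [].
have relB : A_rels chi g r gamB xB.
  split.
  - by apply: val_inj; rewrite rmorph1 /= g1.
  - by move=> h1 h2; apply: val_inj; rewrite rmorphM /= gM.
  - by move=> h; apply: val_inj; rewrite linearZ /= gx.
  - by apply: val_inj; rewrite rmorphB rmorphXn rmorph1 /= xr.
have [[f [[fD fZ fM f1] fg fx]] uniq] := univ B gamB xB relB.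
have hf : is_alg_hom (fun a => val (f a) : A).
  split=> [a1 a2|c a1|a1 a2|]; first by rewrite fD rmorphD.
  - by rewrite fZ linearZ.
  - by rewrite fM rmorphM.
  - by rewrite f1 rmorph1.
have hid : is_alg_hom (fun a : A => a) by [].
have := (proj2 (univ A gam x (proj1 pres))) _ _ hf _ _ hid (fun h => erefl) erefl a.
  move=> <-; case: (f a) => y Hy. have E : \val (mkSB Hy) = y by []. by rewrite E.
- by move=> h /=; rewrite fg.
- by rewrite /= fx.
Qed.

Section Main.
Variables (k : fieldType) (Gam : finGroupType).
Hypothesis Gab : abelian [set: Gam].
Variables (chi : Gam -> k).
Hypothesis chi1 : chi 1%g = 1.
Hypothesis chiM : forall h1 h2, chi (h1 * h2)%g = chi h1 * chi h2.
Variables (g : Gam) (r : nat).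
Hypothesis prim : r.-primitive_root (chi g).
Hypothesis chir : forall h, chi h ^+ r = 1.
Variables (A : algType k) (gam : Gam -> A) (x : A).
Hypothesis presA : is_presented_A chi g r gam x.

Local Notation c := (g ^+ r)%g.

Lemma g1 : gam 1%g = 1. Proof. by case: (proj1 presA). Qed.
Lemma gM h1 h2 : gam (h1 * h2)%g = gam h1 * gam h2. Proof. by case: (proj1 presA). Qed.
Lemma gx h : gam h * x = chi h *: (x * gam h). Proof. by case: (proj1 presA). Qed.
Lemma xr : x ^+ r = gam c - 1. Proof. by case: (proj1 presA). Qed.

Lemma r_gt0 : (0 < r)%N. Proof. exact: prim_order_gt0 prim. Qed.

Lemma gamX h m : gam (h ^+ m)%g = gam h ^+ m.
Proof. by elim: m => [|m IH]; rewrite ?expg0 ?g1 // expgS gM IH exprS. Qed.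

Lemma chiX h m : chi (h ^+ m)%g = chi h ^+ m.
Proof. by elim: m => [|m IH]; rewrite ?expg0 ?chi1 // expgS chiM IH exprS. Qed.

Lemma gamC h1 h2 : gam h1 * gam h2 = gam h2 * gam h1.
Proof.
rewrite -!gM; congr gam; move/centsP: Gab => H; have := H h1 (finset.in_setT h1) h2 (finset.in_setT h2). by [].
Qed.

Lemma gamV h : gam h * gam h^-1 = 1. Proof. by rewrite -gM mulgV g1. Qed.
Lemma gamVl h : gam h^-1 * gam h = 1. Proof. by rewrite -gM mulVg g1. Qed.

Lemma chi0 h : chi h != 0.
Proof.
apply/negP => /eqP H; have := chir h; rewrite H expr0n gtn_eqF ?r_gt0 //.
by move/eqP; rewrite eq_sym oner_eq0.
Qed.

Lemma gxn h m : gam h * x ^+ m = chi h ^+ m *: (x ^+ m * gam h).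
Proof.
elim: m => [|m IH]; first by rewrite !expr0 mul1r mulr1 scale1r.
by rewrite exprSr mulrA IH -scalerAl -(mulrA (x ^+ m) (gam h)) gx -scalerAr scalerA !mulrA -!exprSr.
Qed.

Lemma xg h : x * gam h = (chi h)^-1 *: (gam h * x).
Proof. by rewrite gx scalerA mulVf ?chi0 ?scale1r. Qed.

Lemma chic : chi c = 1. Proof. by rewrite chiX (prim_expr_order prim). Qed.

Definition mono (t : k * nat * Gam) : A := t.1.1 *: (x ^+ t.1.2 * gam t.2).

Definition comb (t u : k * nat * Gam) : k * nat * Gam :=
  (t.1.1 * u.1.1 * chi t.2 ^+ u.1.2, (t.1.2 + u.1.2)%N, (t.2 * u.2)%g).

Lemma mono_mul t u : mono t * mono u = mono (comb t u).
Proof.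
rewrite /mono /comb /= -scalerAl -scalerAr scalerA.
have -> : x ^+ t.1.2 * gam t.2 * (x ^+ u.1.2 * gam u.2) =
  chi t.2 ^+ u.1.2 *: (x ^+ (t.1.2 + u.1.2) * gam (t.2 * u.2)%g).
  rewrite mulrA -(mulrA (x ^+ _)) gxn -scalerAr -scalerAl.
  by rewrite mulrA -exprD -mulrA -gM.
by rewrite scalerA.
Qed.

Definition spanP (a : A) : Prop := exists s : seq (k * nat * Gam), a = \sum_(t <- s) mono t.
Definition spanB : {pred A} := fun a => `[< spanP a >].

Lemma span_closed : subalg_closed spanB.
Proof.
split.
- apply/asboolP; exists [:: (1, 0%N, 1%g)].
  by rewrite big_seq1 /mono /= scale1r expr0 mul1r g1.
- move=> a u v /asboolP[s1 ->] /asboolP[s2 ->]; apply/asboolP.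
  exists ([seq (a * t.1.1, t.1.2, t.2) | t <- s1] ++ s2).
  rewrite big_cat big_map scaler_sumr; congr (_ + _); apply: eq_bigr => t _.
  by rewrite /mono /= scalerA.
- move=> u v /asboolP[s1 ->] /asboolP[s2 ->]; apply/asboolP.
  exists [seq comb t w | t <- s1, w <- s2].
  rewrite big_allpairs_dep big_distrl; apply: eq_bigr => t _.
  by rewrite big_distrr; apply: eq_bigr => w _; exact: mono_mul.
Qed.

Lemma spanning a : spanP a.
Proof.
apply/asboolP; apply: (pres_sub presA span_closed).
- move=> h; apply/asboolP; exists [:: (1, 0%N, h)].
  by rewrite big_seq1 /mono /= scale1r expr0 mul1r.
- apply/asboolP; exists [:: (1, 1%N, 1%g)].
  by rewrite big_seq1 /mono /= scale1r expr1 g1 mulr1.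
Qed.

Lemma x_comm a : exists a', x * a = a' * x.
Proof.
have [s ->] := spanning a.
exists (\sum_(t <- s) mono (t.1.1 / chi t.2, t.1.2, t.2)).
rewrite big_distrr big_distrl; apply: eq_bigr => t _.
rewrite /mono /= -scalerAr -scalerAl -(mulrA (x ^+ _)) gx -scalerAr scalerA.
rewrite mulfVK ?chi0 //; congr (_ *: _).
by rewrite !mulrA -exprS -exprSr.
Qed.

Lemma xn_comm n a : exists a', x ^+ n * a = a' * x ^+ n.
Proof.
elim: n a => [|n IH] a; first by exists a; rewrite expr0 mul1r mulr1.
have [a1 H1] := IH a; have [a2 H2] := x_comm a1.
by exists a2; rewrite exprS -mulrA H1 mulrA H2 -mulrA -exprS.
Qed.

Lemma c_central a : gam c * a = a * gam c.
Proof.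
have [s ->] := spanning a.
rewrite big_distrr big_distrl; apply: eq_bigr => t _.
rewrite /mono /= -scalerAr -scalerAl; congr (_ *: _).
by rewrite mulrA gxn chic expr1n scale1r -mulrA gamC mulrA.
Qed.

Definition e := \sum_(i < #[c]%g) gam (c ^+ i)%g.

Lemma eE : e = \sum_(i < #[c]%g) gam c ^+ i.
Proof. by apply: eq_bigr => i _; rewrite gamX. Qed.

Lemma e_central a : e * a = a * e.
Proof.
rewrite eE big_distrr big_distrl; apply: eq_bigr => i _.
exact: (esym (commrX i (commr_sym (c_central a)))).
Qed.

Lemma e_xr : e * x ^+ r = 0.
Proof.
rewrite xr e_central eE -subrX1 -gamX expg_order g1 subrr //.
Qed.

Lemma nil_pow w m : exists w', (w * (e * x)) ^+ m.+1 = w' * e ^+ m.+1 * x ^+ m.+1.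
Proof.
elim: m => [|m [w' IH]]; first by exists w; rewrite !expr1 mulrA.
have [w'' H] := xn_comm m.+1 w.
exists (w' * w''); rewrite exprSr IH [e ^+ m.+2]exprSr [x ^+ m.+2]exprSr.
have E1 : e ^+ m.+1 * w'' = w'' * e ^+ m.+1.
  exact: (esym (commrX _ (commr_sym (e_central w'')))).
have E2 : x ^+ m.+1 * e = e * x ^+ m.+1 by rewrite e_central.
rewrite -!mulrA (mulrA (x ^+ m.+1)) H -!mulrA (mulrA (e ^+ m.+1)) E1 -!mulrA.
by rewrite (mulrA (x ^+ m.+1)) E2 -!mulrA.
Qed.

Lemma nil_r w : (w * (e * x)) ^+ r = 0.
Proof.
have := nil_pow w r.-1; rewrite prednK ?r_gt0 //; case=> w' ->.
have Er : e ^+ r = e ^+ r.-1 * e by rewrite -exprSr prednK // r_gt0.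
by rewrite Er mulrA -(mulrA _ e) e_xr mulr0.
Qed.

Lemma easy_dir a : ideal_gen (e * x) a -> jacobson_radical a.
Proof.
case=> n [u [v ->]]; apply: jac_sum => i.
have [v' Hv] := x_comm (v i).
have -> : u i * (e * x) * v i = (u i * v') * (e * x).
  by rewrite -!mulrA Hv !mulrA -(mulrA _ e v') e_central !mulrA.
apply: (jac_nil (n := r)) => b; rewrite mulrA; exact: nil_r.
Qed.


Definition Kp (p : A) := exists s : seq (k * Gam), p = \sum_(t <- s) t.1 *: gam t.2.

Lemma K0 : Kp 0. Proof. by exists [::]; rewrite big_nil. Qed.
Lemma Kadd p q : Kp p -> Kp q -> Kp (p + q).
Proof. by case=> s1 -> [s2 ->]; exists (s1 ++ s2); rewrite big_cat. Qed.
Lemma Kscale a p : Kp p -> Kp (a *: p).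
Proof.
case=> s ->; exists [seq (a * t.1, t.2) | t <- s].
by rewrite big_map scaler_sumr; apply: eq_bigr => t _; rewrite scalerA.
Qed.
Lemma Kgam h : Kp (gam h). Proof. by exists [:: (1, h)]; rewrite big_seq1 scale1r. Qed.
Lemma Kmul p q : Kp p -> Kp q -> Kp (p * q).
Proof.
case=> s1 -> [s2 ->]; exists [seq (t.1 * w.1, (t.2 * w.2)%g) | t <- s1, w <- s2].
rewrite big_allpairs_dep big_distrl; apply: eq_bigr => t _.
rewrite big_distrr; apply: eq_bigr => w _ /=.
by rewrite -scalerAl -scalerAr scalerA gM.
Qed.
Lemma KX p m : Kp p -> Kp (p ^+ m).
Proof.
move=> Kp_; elim: m => [|m IH]; first by rewrite expr0 -g1; exact: Kgam.
by rewrite exprS; apply: Kmul.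
Qed.
Lemma Kc1 : Kp (gam c - 1).
Proof. by rewrite -g1; apply: Kadd; [exact: Kgam | rewrite -scaleN1r; apply: Kscale; exact: Kgam]. Qed.
Lemma Ksum (I : Type) (s : seq I) (P : pred I) (F : I -> A) :
  (forall i, Kp (F i)) -> Kp (\sum_(i <- s | P i) F i).
Proof.
move=> HF; elim: s => [|i s IH]; first by rewrite big_nil; exact: K0.
by rewrite big_cons; case: (P i) => //; apply: Kadd.
Qed.

Lemma gam_card h : gam h ^+ #|Gam| = 1.
Proof. by rewrite -gamX -cardsT expg_cardG ?finset.in_setT ?g1. Qed.

Variable z : k.
Hypothesis pz : (#|Gam|).-primitive_root z.

Lemma K_jac p : Kp p -> jacobson_radical p -> p = 0.
Proof.
move=> [s Es] Jp; apply: NNPP => /eqP p0.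
pose P (u : A) := exists h, u = gam h.
have Pn : forall u, P u -> u ^+ #|Gam| = 1 by move=> u [h ->]; exact: gam_card.
have Pc : forall u v, P u -> P v -> u * v = v * u by move=> u v [h1 ->] [h2 ->]; exact: gamC.
pose L := [seq gam h | h <- enum Gam].
have HL : forall u, u \in L -> P u by move=> u /mapP[h _ ->]; exists h.
have [F [FF pF Fc FL]] := eig_ind pz Pn Pc HL p0.
have FLh : forall h, exists w : k, gam h * F = w *: F.
  by move=> h; apply: FL; apply: map_f; rewrite mem_enum.
have [b Hb] : exists b : k, p * F = b *: F.
  rewrite Es; elim: s {Es} => [|t s [b IH]]; first by exists 0; rewrite big_nil mul0r scale0r.
  have [w Hw] := FLh t.2.
  exists (t.1 * w + b); rewrite big_cons mulrDl IH -scalerAl Hw scalerA scalerDl //.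
have pFc : p * F = F * p.
  rewrite Es big_distrl big_distrr; apply: eq_bigr => t _ /=.
  by rewrite -scalerAl -scalerAr (Fc (gam t.2)) //; exists t.2.
have b0 : b != 0 by apply: contraNneq pF => b0; rewrite Hb b0 scale0r.
have F0 : F != 0 by apply: contraNneq pF => ->; rewrite mulr0.
apply: (jac_idem FF F0).
have -> : F = b^-1%:A * (F * p).
  by rewrite -pFc Hb -scalerAl mul1r scalerA mulVf // scale1r.
by apply: jac_mull; apply: jac_mull.
Qed.

Lemma ideal0 (y : A) : ideal_gen y 0.
Proof. by exists 0%N, (fun _ => 0), (fun _ => 0); rewrite big_ord0. Qed.

Lemma ideal_add (y a b : A) : ideal_gen y a -> ideal_gen y b -> ideal_gen y (a + b).
Proof.
case=> n1 [u1 [v1 ->]] [n2 [u2 [v2 ->]]].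
pose sel (T : Type) (f1 : 'I_n1 -> T) (f2 : 'I_n2 -> T) (i : 'I_(n1 + n2)) :=
  match split i with inl a => f1 a | inr b => f2 b end.
exists (n1 + n2)%N, (sel _ u1 u2), (sel _ v1 v2).
rewrite big_split_ord; congr (_ + _); apply: eq_bigr => i _.
  by have E : split (lshift n2 i) = inl i := unsplitK (inl i); rewrite /sel E.
by have E : split (rshift n1 i) = inr i := unsplitK (inr i); rewrite /sel E.
Qed.

Lemma ideal_sum (y : A) (I : Type) (s : seq I) (F : I -> A) :
  (forall i, ideal_gen y (F i)) -> ideal_gen y (\sum_(i <- s) F i).
Proof.
move=> HF; elim: s => [|i s IH]; first by rewrite big_nil; exact: ideal0.
by rewrite big_cons; apply: ideal_add.
Qed.

Definition pj (s : seq (k * nat * Gam)) (j : nat) :=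
  \sum_(t <- s | (t.1.2 %% r == j)%N) t.1.1 *: ((gam c - 1) ^+ (t.1.2 %/ r) * gam t.2).

Lemma mono_split t :
  mono t = x ^+ (t.1.2 %% r) * (t.1.1 *: ((gam c - 1) ^+ (t.1.2 %/ r) * gam t.2)).
Proof.
rewrite /mono -scalerAr; congr (_ *: _).
by rewrite -xr -exprM mulrA -exprD mulnC addnC -divn_eq.
Qed.

Lemma pj_mul s j : x ^+ j * pj s j = \sum_(t <- s | (t.1.2 %% r == j)%N) mono t.
Proof.
rewrite /pj big_distrr; apply: eq_bigr => t /eqP Hj.
by rewrite mono_split Hj.
Qed.

Lemma decomp s : \sum_(t <- s) mono t = \sum_(j < r) x ^+ j * pj s j.
Proof.
under [RHS]eq_bigr => j _ do rewrite pj_mul big_mkcond.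
rewrite exchange_big /=; apply: eq_bigr => t _.
rewrite -big_mkcond /= (big_pred1 (Ordinal (ltn_pmod t.1.2 r_gt0))) //.
Qed.

Lemma conj_mono h t : gam h * mono t * gam h^-1 = chi h ^+ t.1.2 *: mono t.
Proof.
rewrite /mono -scalerAr -scalerAl scalerA mulrC -scalerA; congr (_ *: _).
by rewrite mulrA gxn -scalerAl -!mulrA gamC -scalerAl -!mulrA gamV mulr1.
Qed.

Definition Proj (j : nat) (a : A) :=
  (r%:R)^-1 *: \sum_(m < r) (chi g ^+ (m * (r - j))) *: (gam (g ^+ m)%g * a * gam ((g ^+ m)^-1)%g).

Lemma jac_scale (b : k) (y : A) : jacobson_radical y -> jacobson_radical (b *: y).
Proof. by move=> Jy; rewrite -[y]mul1r scalerAl; apply: jac_mull. Qed.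

Lemma Proj_jac j a : jacobson_radical a -> jacobson_radical (Proj j a).
Proof.
move=> Ja; apply: jac_scale; apply: jac_sum => m; apply: jac_scale.
by apply: jac_conj => //; [exact: gamV | exact: gamVl].
Qed.

Lemma coefP j n : (j < r)%N ->
  (r%:R)^-1 * \sum_(m < r) chi g ^+ (m * (r - j)) * chi (g ^+ m)%g ^+ n =
  ((n %% r == j)%N)%:R.
Proof.
move=> jr.
have E : forall m : 'I_r, chi g ^+ (m * (r - j)) * chi (g ^+ m)%g ^+ n
    = (chi g ^+ (r - j + n)) ^+ m.
  by move=> m; rewrite chiX -!exprM -exprD -mulnDr mulnC.
rewrite (eq_bigr _ (fun m _ => E m)).
have key : (chi g ^+ (r - j + n) == 1) = (n %% r == j)%N.
  rewrite -(prim_expr_order prim) (eq_prim_root_expr prim).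
  by rewrite -(eqn_modDr j) addnAC subnK ?(ltnW jr) // eqn_modDl (modn_small jr).
have [Hnj|Hnj] := eqVneq (n %% r)%N j.
  move: key; rewrite Hnj eqxx => /eqP ->.
  rewrite (eq_bigr (fun _ => 1)); last by move=> m _; rewrite expr1n.
  by rewrite sumr_ord_const mulVf ?(prim_root_natf_neq0 prim).
rewrite geom0 ?mulr0 //; last by rewrite key (negbTE Hnj).
by rewrite -exprM mulnC exprM (prim_expr_order prim) expr1n.
Qed.

Lemma Proj_eval j s : (j < r)%N ->
  Proj j (\sum_(t <- s) mono t) = \sum_(t <- s | (t.1.2 %% r == j)%N) mono t.
Proof.
move=> jr; rewrite /Proj.
have E : forall m : 'I_r, chi g ^+ (m * (r - j)) *:
    (gam (g ^+ m)%g * (\sum_(t <- s) mono t) * gam ((g ^+ m)^-1)%g) =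
    \sum_(t <- s) (chi g ^+ (m * (r - j)) * chi (g ^+ m)%g ^+ t.1.2) *: mono t.
  move=> m; rewrite big_distrr big_distrl scaler_sumr; apply: eq_bigr => t _ /=.
  by rewrite conj_mono scalerA.
rewrite (eq_bigr _ (fun m _ => E m)) exchange_big scaler_sumr [RHS]big_mkcond /=.
apply: eq_bigr => t _; rewrite -scaler_suml scalerA coefP //.
by case: (_ == _); rewrite ?scale1r ?scale0r.
Qed.

Lemma per_j j p : (j < r)%N -> Kp p -> jacobson_radical (x ^+ j * p) ->
  ideal_gen (e * x) (x ^+ j * p).
Proof.
move=> jr Kp_ Jp.
case: j jr Jp => [|j] jr Jp.
  by rewrite expr0 mul1r in Jp *; rewrite (K_jac Kp_ Jp); exact: ideal0.
have J2 : jacobson_radical ((gam c - 1) * p).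
  have := jac_mull (x ^+ (r - j.+1)) Jp.
  by rewrite mulrA -exprD subnK ?(ltnW jr) // xr.
have Hc : gam c * p = p.
  by apply/eqP; rewrite -subr_eq0 -{2}[p]mul1r -mulrBl (K_jac (Kmul Kc1 Kp_) J2).
have Hci : forall i, gam c ^+ i * p = p.
  by elim=> [|i IH]; rewrite ?expr0 ?mul1r // exprSr -mulrA Hc.
have ep : e * p = (#[c]%g)%:R *: p.
  rewrite eE big_distrl (eq_bigr (fun _ => p)) ?sumr_ord_const ?scaler_nat //.
  by move=> i _; exact: Hci.
have s0 : ((#[c]%g)%:R : k) != 0.
  apply: (prim_root_dvd_eq0 pz); rewrite -cardsT; apply: order_dvdG; exact: finset.in_setT.
exists 1%N, (fun _ => ((#[c]%g)%:R)^-1 *: x ^+ j), (fun _ => p); rewrite big_ord1.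
rewrite (e_central x) -scalerAl -scalerAl -!mulrA ep -scalerAr -scalerAr scalerA.
by rewrite mulVf // scale1r mulrA -exprSr.
Qed.

Lemma hard_dir a : jacobson_radical a -> ideal_gen (e * x) a.
Proof.
move=> Ja; have [s Es] := spanning a.
rewrite Es decomp; apply: ideal_sum => j; apply: per_j => //.
- apply: Ksum => t; apply: Kscale; apply: Kmul; [apply: KX; exact: Kc1 | exact: Kgam].
- by rewrite pj_mul -Proj_eval // -Es; exact: Proj_jac.
Qed.

End Main.

Theorem mainTheorem8
  (k : closedFieldType) (char0 : [pchar k] =i pred0)
  (Gam : finGroupType) (Gab : abelian [set: Gam])
  (chi : Gam -> k) (chi1 : chi 1%g = 1)
  (chiM : forall h1 h2, chi (h1 * h2)%g = chi h1 * chi h2)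
  (g : Gam) (r : nat)
  (prim : r.-primitive_root (chi g))
  (chir : forall h, chi h ^+ r = 1)
  (gr1 : (g ^+ r)%g != 1%g)
  (A : algType k) (gam : Gam -> A) (x : A)
  (presA : is_presented_A chi g r gam x) :
  forall a : A, jacobson_radical a <->
    ideal_gen ((\sum_(i < #[(g ^+ r)%g]%g) gam ((g ^+ r) ^+ i)%g) * x) a.
Proof.
move=> a.
have n0 : (0 < #|Gam|)%N by apply/card_gt0P; exists 1%g.
have [z pz] := prim_root_ex char0 n0.
split.
- exact: (hard_dir Gab chi1 chiM prim presA pz).
- exact: (easy_dir Gab chi1 chiM prim chir presA).
Qed.
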